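(* Let $m,n\geq 1$ be integers and set $k_0:=n$. Then, as an identity of rational functions in $x$, \[ \sum_{k=1}^{n}\binom{n}{k}\frac{(m-x)_k(x-1)_{n-k}}{(x-m)_{m+n-1}k^m} =\sum_{1\leq k_{m-1}\leq\cdots\leq k_1\leq n}\frac{\sum_{j=1}^{k_{m-1}-1}\frac{1}{x+j-m}-\sum_{j=1}^{k_{m-1}}\frac{1}{j}}{k_1k_2\cdots k_{m-1} (x+k_1-2)(x+k_2-3)\cdots(x+k_{m-1}-m)}, \] where for $m=1$ the outer sum is the single term with empty products equal to $1$ and $k_0=n$.
   Context: $(x)_N=x(x+1)\cdots(x+N-1)$ denotes the rising factorial, with $(x)_0=1$. *)

(* Defs.v *)
From HB Require Import structures.
From mathcomp Require Import all_boot all_order all_algebra fraction.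
Set Implicit Arguments. Unset Strict Implicit. Unset Printing Implicit Defensive.
Import Order.TTheory GRing.Theory Num.Theory.
Local Open Scope ring_scope.

Definition ratfun := {fraction {poly rat}}.
Definition xF : ratfun := tofrac ('X : {poly rat}).

Definition rising (R : comNzRingType) (x : R) (N : nat) : R :=
  \prod_(i < N) (x + i%:R).

(* A chain 1 <= k_p <= ... <= k_1 <= n (p = m-1) is encoded by
   t : {ffun 'I_p -> 'I_n}, with k_i = (t (i-1)).+1 for 1 <= i <= p;
   k_0 = n by convention. *)
Definition kk (n p : nat) (t : {ffun 'I_p -> 'I_n}) (i : nat) : nat :=
  if i is i'.+1 then
    (if insub i' is Some j then (t j).+1 else n)
  else n.

Definition chain (n p : nat) (t : {ffun 'I_p -> 'I_n}) : bool :=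
  [forall i : 'I_p, forall j : 'I_p, (i <= j)%N ==> (t j <= t i)%N].

(* Main.v *)
Require Import Defs.
From HB Require Import structures.
From mathcomp Require Import all_boot all_order all_algebra fraction.
From mathcomp Require Import ring.
Import Order.TTheory GRing.Theory Num.Theory.
Local Open Scope ring_scope.

Section Ris.
Variable R : comNzRingType.
Implicit Types x a b : R.

Lemma rising0 x : rising x 0 = 1.
Proof. by rewrite /rising big_ord0. Qed.

Lemma risingS x N : rising x N.+1 = rising x N * (x + N%:R).
Proof. by rewrite /rising big_ord_recr. Qed.

Lemma risingSl x N : rising x N.+1 = x * rising (x + 1) N.
Proof.
rewrite /rising big_ord_recl addr0; congr (_ * _).
by apply: eq_bigr => i _; rewrite lift0 -nat1r addrA.
Qed.

Lemma vandermonde a b n :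
  rising (a + b) n = \sum_(k < n.+1) 'C(n, k)%:R * rising a k * rising b (n - k).
Proof.
elim: n => [|n IH]; first by rewrite big_ord1 !rising0 mul1r mulr1.
rewrite risingS IH mulr_suml.
have E : forall k : 'I_n.+1, 'C(n, k)%:R * rising a k * rising b (n - k) * (a + b + n%:R)
   = 'C(n, k)%:R * rising a k.+1 * rising b (n - k) + 'C(n, k)%:R * rising a k * rising b (n.+1 - k).
  move=> k; have hk : (k <= n)%N by rewrite -ltnS.
  rewrite risingS subSn // risingS natrB //; ring.
rewrite (eq_bigr _ (fun k _ => E k)) big_split /=.
rewrite [in RHS]big_ord_recl /= subn0 bin0 !rising0 mul1r.
under [in RHS]eq_bigr => i _ do rewrite binS natrD mulrDl mulrDl subSS.
rewrite big_split /= [X in _ = _ + X]addrC addrCA; congr (_ + _).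
rewrite [in RHS]big_ord_recr /= bin_small // mul0r mul0r addr0.
rewrite [in LHS]big_ord_recl /= bin0 rising0 subn0 mul1r mul1r.
by rewrite mul1r.
Qed.

End Ris.

Section Gen.
Variable F : fieldType.
Hypothesis hF : forall k : nat, (k.+1)%:R != 0 :> F.

Definition good (x : F) := forall z : int, x + z%:~R != 0.

Lemma good_sub1 x : good x -> good (x - 1).
Proof. by move=> hx z; rewrite -addrA -[- 1](intrN _ 1) -intrD hx. Qed.

Lemma good_ab {x} (hx : good x) (a b : nat) : x + a%:R - b%:R != 0.
Proof. by have := hx (a%:Z - b%:Z); rewrite intrB !pmulrn addrA. Qed.



Definition Lt (m : nat) (x : F) (n k : nat) : F :=
  'C(n, k)%:R * rising (m%:R - x) k * rising (x - 1) (n - k)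
       / (rising (x - m%:R) (m + n - 1) * (k%:R) ^+ m).

Lemma rising_nz {x} (hx : good x) c N : rising (x - c%:R) N != 0.
Proof.
rewrite /rising; apply/prodf_neq0 => i _.
by rewrite addrAC good_ab.
Qed.

Lemma rising_top x (hx : good x) q n :
  rising (x - q.+1%:R) (q.+1 + n.+1 - 1) =
  rising (x - q.+1%:R) (q + n) * (x + n.+1%:R - 2%:R).
Proof.
rewrite (_ : (q.+1 + n.+1 - 1 = (q + n).+1)%N); last by rewrite addSn addnS subn1.
rewrite risingS; congr (_ * _); rewrite natrD; ring.
Qed.

Lemma alg1 (K0 : fieldType) (A D E K P : K0) : D != 0 -> E != 0 -> K != 0 -> P != 0 ->
  1 * A * 1 / (D * E * (K * P)) - 0 * A * 1 / (D * (K * P)) =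
  1 * A * 1 / (D * P) / (K * E).
Proof. move=> hD hE hK hP; field; by rewrite hD hE hK hP. Qed.

Lemma alg2 (K0 : fieldType) (A D Y0 x c J J1 K P N1 : K0) :
  J1 = J + 1 -> N1 = K + J + 1 ->
  D != 0 -> x + N1 - 2 != 0 -> K != 0 -> P != 0 -> N1 != 0 ->
  c * A * (Y0 * (x - 1 + J)) / (D * (x + N1 - 2) * (K * P)) - (J1 * c / N1) * A * Y0 / (D * (K * P))
  = c * A * ((x - 2) * Y0) / (D * P) / (N1 * (x + N1 - 2)).
Proof. move=> -> hN hD hE hK hP hN1. rewrite hN in hE hN1 *. field. by rewrite hD hE hK hP hN1. Qed.

Lemma term_step q x (hx : good x) n k (hk1 : (1 <= k)%N) (hk : (k <= n.+1)%N) :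
  Lt q.+1 x n.+1 k - Lt q.+1 x n k =
  'C(n.+1, k)%:R * rising (q.+1%:R - x) k * rising (x - 2%:R) (n.+1 - k)
     / (rising (x - q.+1%:R) (q + n) * (k%:R) ^+ q)
     / (n.+1%:R * (x + n.+1%:R - 2%:R)).
Proof.
rewrite /Lt rising_top // (_ : (q.+1 + n - 1 = q + n)%N); last by rewrite addSn subn1.
have hD := rising_nz hx q.+1 (q + n).
have hE : x + n.+1%:R - 2%:R != 0 by apply: good_ab.
case: k hk1 hk => // k _ hk.
have hK := hF k.
have hN := hF n.
have hP : k.+1%:R ^+ q != 0 :> F := expf_neq0 q (hF k).
rewrite exprS.
move: hk; rewrite leq_eqVlt => /orP [/eqP [hkn] | hk]; first subst k.
  have -> : (n - n.+1 = 0)%N by apply/eqP; rewrite subn_eq0.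
  rewrite subnn (bin_small (ltnSn n)) !rising0 binn.
  exact: (@alg1 _ _ _ _ _ _ hD hE hN hP).
have [j hn] : exists j, n = (k.+1 + j)%N by exists (n - k.+1)%N; rewrite subnKC.
have e1 : (n.+1 - k.+1 = j.+1)%N by rewrite hn -addnS addKn.
have e2 : (n - k.+1 = j)%N by rewrite hn addKn.
have hb : 'C(n, k.+1)%:R = j.+1%:R * 'C(n.+1, k.+1)%:R / n.+1%:R :> F.
  have hnat : ('C(n, k.+1) * n.+1 = j.+1 * 'C(n.+1, k.+1))%N.
    by rewrite mulnC (mul_bin_down n.+1 k.+1) e1.
  apply: (mulIf hN); rewrite mulfVK //.
  have := congr1 (fun z : nat => (z%:R : F)) hnat.
  by rewrite /= !natrM.
set A := rising (q.+1%:R - x) k.+1.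
set D := rising (x - q.+1%:R) (q + n).
rewrite e1 e2 hb [rising (x - 1) j.+1]risingS [rising (x - 2%:R) j.+1]risingSl.
rewrite (_ : x - 2%:R + 1 = x - 1); last first.
  by rewrite -addrA; congr (_ + _); rewrite -[2%:R]natr1 opprD addrNK.
have e3 : j.+1%:R = j%:R + 1 :> F by rewrite -natr1.
have e4 : n.+1%:R = k.+1%:R + j%:R + 1 :> F by rewrite hn -natr1 natrD.
exact: (@alg2 _ _ _ _ _ _ _ _ _ _ _ e3 e4 hD hE hK hP hN).
Qed.




Definition L m (x : F) n : F := \sum_(1 <= k < n.+1) Lt m x n k.
Definition Hn (n : nat) : F := \sum_(1 <= j < n.+1) (j%:R)^-1.
Fixpoint R (p : nat) (x : F) (n : nat) : F :=
  match p with
  | 0 => \sum_(1 <= j < n) (x + j%:R - 1)^-1 - Hn n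
  | p'.+1 => \sum_(1 <= k < n.+1) R p' (x - 1) k / (k%:R * (x + k%:R - 2%:R))
  end.

Definition St q (x : F) n k : F :=
  'C(n.+1, k)%:R * rising (q.+1%:R - x) k * rising (x - 2%:R) (n.+1 - k)
     / (rising (x - q.+1%:R) (q + n) * (k%:R) ^+ q)
     / (n.+1%:R * (x + n.+1%:R - 2%:R)).

Lemma L_step q x (hx : good x) n :
  L q.+1 x n.+1 = L q.+1 x n + \sum_(1 <= k < n.+2) St q x n k.
Proof.
have hL : \sum_(1 <= k < n.+2) Lt q.+1 x n k = L q.+1 x n.
  by rewrite big_nat_recr //= /L /Lt (bin_small (ltnSn n)) !mul0r addr0.
rewrite -hL /L.
apply/eqP; rewrite -subr_eq eq_sym -sumrB; apply/eqP.
apply: eq_big_nat => k /andP [hk1 hk2].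
by rewrite /St -term_step // opprB addrCA subrr addr0.
Qed.


Lemma St_succ p x n k :
  St p.+1 x n k = Lt p.+1 (x - 1) n.+1 k / (n.+1%:R * (x + n.+1%:R - 2%:R)).
Proof.
rewrite /St /Lt.
have e1 : p.+2%:R - x = p.+1%:R - (x - 1) :> F by ring.
have e2 : x - 2%:R = x - 1 - 1 :> F by ring.
have e3 : x - p.+2%:R = x - 1 - p.+1%:R :> F by ring.
have e4 : (p.+1 + n = p.+1 + n.+1 - 1)%N by rewrite addnS subn1.
by rewrite e1 e2 e3 e4.
Qed.

Lemma HnS n : Hn n.+1 = Hn n + (n.+1%:R)^-1.
Proof. by rewrite /Hn big_nat_recr. Qed.

Lemma rising_m1 n : rising (-1 : F) n.+2 = 0.
Proof. by rewrite risingSl risingSl addNr mul0r mulr0. Qed.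

Lemma St0_sum x (hx : good x) n :
  \sum_(1 <= k < n.+2) St 0 x n k = R 0 x n.+1 - R 0 x n.
Proof.
rewrite /St.
under eq_bigr => k _ do rewrite expr0 mulr1.
rewrite -mulr_suml -mulr_suml.
set a := fun k => 'C(n.+1, k)%:R * rising (1%:R - x) k * rising (x - 2%:R) (n.+1 - k).
have hV : \sum_(1 <= k < n.+2) a k = rising (-1) n.+1 - rising (x - 2%:R) n.+1.
  have := @vandermonde _ (1%:R - x) (x - 2%:R) n.+1.
  rewrite (_ : 1%:R - x + (x - 2%:R) = -1); last by ring.
  rewrite -(big_mkord xpredT a) (big_ltn (isT : (0 < n.+2)%N)) => ->.
  by rewrite /a bin0 rising0 subn0 !mul1r addrAC subrr add0r.
rewrite hV add0n [rising (x - 2%:R) n.+1]risingSl (_ : x - 2%:R + 1 = x - 1); last by ring.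
have hD : rising (x - 1) n != 0 := rising_nz hx 1 n.
have hE : x + n.+1%:R - 2%:R != 0 := good_ab hx n.+1 2.
clear hV a; case: n hD hE => [|n] hD hE.
  rewrite /R /Hn (big_geq (leqnn 1)) (big_geq (isT : (0 <= 1)%N)) big_nat1 !rising0.
  rewrite risingS rising0.
  by field; rewrite oner_neq0 hE.
rewrite /R HnS (big_nat_recr n.+1) //= rising_m1.
rewrite (_ : x + n.+1%:R - 1 = x + n.+2%:R - 2%:R); last by ring.
set S := \sum_(1 <= i < n.+1) _.
set T := Hn n.+1.
field.
have -> : 2 + n%:R = n.+2%:R :> F by rewrite -natrD.
by rewrite hF hE hD.
Qed.

Lemma LR p : forall x, good x -> forall n, L p.+1 x n = R p x n.
Proof.
elim: p => [|p IHp] x hx n; elim: n => [|n IHn].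
- by rewrite /L /R /Hn !big_geq // subrr.
- by rewrite L_step // IHn St0_sum // addrC subrK.
- by rewrite /L /R !big_geq.
- rewrite L_step // IHn /=.
  rewrite [in RHS](big_nat_recr n.+1) //=; congr (_ + _).
  rewrite (eq_bigr (fun k => Lt p.+1 (x - 1) n.+1 k / (n.+1%:R * (x + n.+1%:R - 2%:R)))); last first.
    by move=> k _; exact: St_succ.
  by rewrite -mulr_suml -(IHp _ (good_sub1 _ hx)).
Qed.
End Gen.

Section Comb.
Variable N : nat.

Definition kk' p (n : nat) (t : {ffun 'I_p -> 'I_N}) (i : nat) : nat :=
  if i is i'.+1 then (if insub i' is Some j then (t j).+1 else n) else n.

Definition chain' p n (t : {ffun 'I_p -> 'I_N}) := chain t && [forall i, t i < n]%N.

Definition hcons p (a : 'I_N) (t : {ffun 'I_p -> 'I_N}) : {ffun 'I_p.+1 -> 'I_N} :=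
  [ffun i => if unlift ord0 i is Some j then t j else a].

Arguments kk' {p}.
Arguments chain' {p}.
Arguments hcons {p}.

Lemma hcons0 p (a : 'I_N) (t : {ffun 'I_p -> 'I_N}) : hcons a t ord0 = a.
Proof. by rewrite ffunE unlift_none. Qed.

Lemma hconsL p (a : 'I_N) (t : {ffun 'I_p -> 'I_N}) j : hcons a t (lift ord0 j) = t j.
Proof. by rewrite ffunE liftK. Qed.

Lemma kk_in p n (t : {ffun 'I_p -> 'I_N}) i (hi : (i < p)%N) :
  kk' n t i.+1 = (t (Ordinal hi)).+1.
Proof. by rewrite /kk' insubT /=; congr (t _).+1; apply: val_inj. Qed.

Lemma kk_hcons p n (a : 'I_N) (t : {ffun 'I_p -> 'I_N}) i (hi : (i <= p)%N) :
  kk' n (hcons a t) i.+1 = kk' a.+1 t i.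
Proof.
rewrite (@kk_in p.+1 n (hcons a t) i hi).
case: i hi => [|i] hi.
  by rewrite (_ : Ordinal _ = ord0) ?hcons0 //; apply: val_inj.
rewrite (@kk_in p a.+1 t i hi); congr _.+1.
rewrite (_ : Ordinal _ = lift ord0 (Ordinal (hi : (i < p)%N))) ?hconsL //.
by apply: val_inj.
Qed.

Lemma chain_hcons p n (a : 'I_N) (t : {ffun 'I_p -> 'I_N}) :
  chain' n (hcons a t) = (a < n)%N && chain' a.+1 t.
Proof.
rewrite /chain' /chain.
apply/idP/idP.
  case/andP => /forallP hc /forallP hn.
  have ha : (a < n)%N by have := hn ord0; rewrite hcons0.
  rewrite ha /=; apply/andP; split.
    apply/forallP => i; apply/forallP => j; apply/implyP => hij.
    have := hc (lift ord0 i) => /forallP /(_ (lift ord0 j)) /implyP.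
    by rewrite !hconsL; apply; rewrite /= /bump /= !add1n ltnS.
  apply/forallP => i; rewrite ltnS.
  have := hc ord0 => /forallP /(_ (lift ord0 i)) /implyP.
  by rewrite hconsL hcons0; apply.
case/and3P => ha /forallP hc /forallP hn.
apply/andP; split.
  apply/forallP => i; apply/forallP => j; apply/implyP => hij.
  case: (unliftP ord0 i) hij => [i'|] -> ; case: (unliftP ord0 j) => [j'|] -> //=.
  - rewrite /bump /= !add1n ltnS => hij.
    rewrite !hconsL; by have := hc i' => /forallP /(_ j') /implyP; apply.
  - by move=> _; rewrite hconsL hcons0 -ltnS.
apply/forallP => i; case: (unliftP ord0 i) => [i'|] ->.
  by rewrite hconsL (leq_trans _ ha) // -ltnS.
by rewrite hcons0.
Qed.

Lemma sum_ffunS (F : nmodType) p (P : pred {ffun 'I_p.+1 -> 'I_N}) (f : {ffun 'I_p.+1 -> 'I_N} -> F) :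
  \sum_(t | P t) f t = \sum_(a : 'I_N) \sum_(t' : {ffun 'I_p -> 'I_N} | P (hcons a t')) f (hcons a t').
Proof.
rewrite pair_big_dep /=.
rewrite (reindex (fun u : 'I_N * {ffun 'I_p -> 'I_N} => hcons u.1 u.2)) /=.
  by [].
apply: onW_bij.
exists (fun t : {ffun 'I_p.+1 -> 'I_N} => (t ord0, [ffun j => t (lift ord0 j)])).
  move=> [a t] /=; rewrite hcons0; congr (_, _); apply/ffunP => j.
  by rewrite ffunE hconsL.
move=> t; apply/ffunP => i; case: (unliftP ord0 i) => [i'|] ->.
  by rewrite hconsL ffunE.
by rewrite hcons0.
Qed.

End Comb.

Arguments kk' {N p}.
Arguments chain' {N p}.
Arguments hcons {N p}.
Arguments Hn {F}.

Section CSsec.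
Variable F : fieldType.

Definition Gt N p n (x : F) (t : {ffun 'I_p -> 'I_N}) : F :=
  (\sum_(1 <= j < kk' n t p) (x + j%:R - (p.+1)%:R)^-1 - Hn (kk' n t p))
  / \prod_(1 <= i < p.+1) ((kk' n t i)%:R * (x + (kk' n t i)%:R - (i.+1)%:R)).

Arguments Gt {N p}.

Definition CS N p n (x : F) : F := \sum_(t : {ffun 'I_p -> 'I_N} | chain' n t) Gt n x t.

Lemma Gt_hcons N p n (x : F) (a : 'I_N) (t : {ffun 'I_p -> 'I_N}) :
  Gt n x (hcons a t) = Gt a.+1 (x - 1) t / (a.+1%:R * (x + a.+1%:R - 2%:R)).
Proof.
rewrite /Gt (@kk_hcons N p n a t p (leqnn p)).
rewrite (big_ltn (isT : (1 < p.+2)%N)) big_add1.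
rewrite (@kk_hcons N p n a t 0 (leq0n p)).
have hP : \prod_(1 <= i < p.+2.-1)
      ((kk' n (hcons a t) i.+1)%:R * (x + (kk' n (hcons a t) i.+1)%:R - (i.+2)%:R)) =
   \prod_(1 <= i < p.+1) ((kk' a.+1 t i)%:R * (x - 1 + (kk' a.+1 t i)%:R - (i.+1)%:R)).
  apply: eq_big_nat => i /andP [_ hi]; rewrite (@kk_hcons N p n a t i hi).
  congr (_ * _); ring.
rewrite hP.
have hS : \sum_(1 <= j < kk' a.+1 t p) (x + j%:R - (p.+2)%:R)^-1 =
   \sum_(1 <= j < kk' a.+1 t p) (x - 1 + j%:R - (p.+1)%:R)^-1.
  by apply: eq_big_nat => j _; congr (_^-1); ring.
rewrite hS.
by rewrite invfM mulrA mulrAC.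
Qed.


Lemma CS_R N p : forall (x : F) n, (n <= N)%N -> CS N p n x = R F p x n.
Proof.
elim: p => [|p IHp] x n hn.
  rewrite /CS (big_pred1 (ffun0 (card_ord 0))); last first.
    move=> t; rewrite /chain' /chain /=.
    have -> : t == ffun0 (card_ord 0) by apply/eqP/ffunP => -[].
    apply/andP; split; apply/forallP => -[] //.
  rewrite /Gt /= (big_geq (leqnn 1)) divr1.
  by [].
rewrite /CS sum_ffunS.
have hin : forall a : 'I_N,
   \sum_(t' : {ffun 'I_p -> 'I_N} | chain' n (hcons a t')) Gt n x (hcons a t') =
   if (a < n)%N then CS N p a.+1 (x - 1) / (a.+1%:R * (x + a.+1%:R - 2%:R)) else 0.
  move=> a; under eq_bigl => t' do rewrite chain_hcons.
  case: ifP => ha; last by rewrite big_pred0.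
  rewrite /CS mulr_suml; apply: eq_big => t' //.
  by move=> _; exact: Gt_hcons.
rewrite (eq_bigr _ (fun a _ => hin a)) -big_mkcond /= (big_ord_narrow hn) /=.
rewrite -(big_mkord xpredT (fun a => CS N p a.+1 (x - 1) / (a.+1%:R * (x + a.+1%:R - 2%:R)))).
rewrite /= big_add1 /=.
apply: eq_big_nat => i /andP [_ hi].
by rewrite IHp // (leq_trans hi hn).
Qed.
End CSsec.

Arguments good {F}.

Lemma good_xF : good xF.
Proof.
move=> z; rewrite /xF.
have -> : (z%:~R : ratfun) = tofrac ((z%:~R : rat)%:P).
  by rewrite (rmorph_int polyC) (rmorph_int (@tofrac _)).
rewrite -rmorphD /= tofrac_eq0 -size_poly_eq0 size_XaddC //.
Qed.

Lemma natr_nz (k : nat) : (k.+1)%:R != 0 :> ratfun.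
Proof.
have -> : (k.+1%:R : ratfun) = tofrac (((k.+1)%:R : rat)%:P).
  by rewrite polyC_natr rmorph_nat.
by rewrite tofrac_eq0 polyC_eq0 pnatr_eq0.
Qed.

Theorem corollary5p2 (m n : nat) (hm : (1 <= m)%N) (hn : (1 <= n)%N) :
  \sum_(1 <= k < n.+1)
     ('C(n, k)%:R * rising (m%:R - xF) k * rising (xF - 1) (n - k)
       / (rising (xF - m%:R) (m + n - 1) * (k%:R) ^+ m))
  =
  \sum_(t : {ffun 'I_(m - 1) -> 'I_n} | chain t)
     ((\sum_(1 <= j < kk t (m - 1)) (xF + j%:R - m%:R)^-1
        - \sum_(1 <= j < (kk t (m - 1)).+1) (j%:R : ratfun)^-1)
      / \prod_(1 <= i < m)
          ((kk t i)%:R * (xF + (kk t i)%:R - (i.+1)%:R))).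
Proof.
case: m hm => [//|p] _.
rewrite (_ : (p.+1 - 1 = p)%N); last by rewrite subn1.
have hL := @LR _ natr_nz p xF good_xF n.
have hC := @CS_R _ n p xF n (leqnn n).
rewrite -[LHS]/(L _ p.+1 xF n).
rewrite hL -hC /CS.
apply: eq_bigl => t.
rewrite /chain'; apply/andb_idr => _; apply/forallP => i; exact: ltn_ord.
Qed.
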